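(* The function \[ \hat H_\mu(s)=\frac{\tau_\mu^2s+\ell\sqrt{1+\kappa^2s^2}}{\tau_\mu^2s^2+s\ell\sqrt{1+\kappa^2s^2}+1} \] is holomorphic on $\mathbb C_0=\{\mathfrak{Re}\,s>0\}$ and admits only two branching points, at $\pm i\kappa^{-1}$. Moreover all the zeros of the denominator $P(s)=\tau_\mu^2s^2+s\ell\sqrt{1+\kappa^2s^2}+1$ (defined on $\mathbb C$ deprived of the cuts $i(-\infty,-\kappa^{-1}]\cup i[\kappa^{-1},\infty)$, and extended by continuity to the imaginary axis) have strictly negative real part.
   Context: $\ell>0$, $\kappa>0$, $\tau_{\rm buoy}>0$, $h_{\rm eq}$ continuous on $[0,\ell]$ with $0<h_{\rm eq}<1$, $\tau_\mu^2=\tau_{\rm buoy}^2+\frac1\ell\int_0^\ell\frac{x^2}{h_{\rm eq}(x)}dx+\frac{\kappa^2}{h_{\rm eq}(\ell)}$. The square root $\sqrt{z}$ denotes the square root with positive real part. *)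

(* Defs.v *)
From Stdlib Require Import Reals ClassicalEpsilon.
From Coquelicot Require Import Coquelicot.
Open Scope R_scope.

(* The square root with positive real part: sqrt z is a w with w*w = z and
   Re w > 0 (unique when it exists, i.e. when z is not in (-oo,0]);
   on (-oo,0] the value is irrelevant/unspecified. *)
Definition csqrt (z : C) : C :=
  epsilon (inhabits (RtoC 0)) (fun w => (w * w = z)%C /\ 0 < Re w).

Definition tau_mu2 (ell kappa tau_buoy : R) (h_eq : R -> R) : R :=
  tau_buoy ^ 2 + / ell * RInt (fun x => x ^ 2 / h_eq x) 0 ell
  + kappa ^ 2 / h_eq ell.

Definition radicand (kappa : R) (s : C) : C :=
  (RtoC 1 + RtoC (kappa ^ 2) * s * s)%C.

Definition Pden (ell kappa t2 : R) (s : C) : C :=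
  (RtoC t2 * s * s + s * RtoC ell * csqrt (radicand kappa s) + RtoC 1)%C.

Definition Hnum (ell kappa t2 : R) (s : C) : C :=
  (RtoC t2 * s + RtoC ell * csqrt (radicand kappa s))%C.

Definition Hhat (ell kappa t2 : R) (s : C) : C :=
  (Hnum ell kappa t2 s / Pden ell kappa t2 s)%C.

Definition on_cuts (kappa : R) (s : C) : Prop :=
  Re s = 0 /\ / kappa <= Rabs (Im s).

Definition sqrt_branch_point (kappa : R) (s0 : C) : Prop :=
  forall r, 0 < r ->
    ~ exists g : C -> C, forall z, 0 < Cmod (z - s0) < r ->
        continuous g z /\ (g z * g z = radicand kappa z)%C.

Definition sqrt_regular_point (kappa : R) (s0 : C) : Prop :=
  exists r, 0 < r /\ exists g : C -> C, forall z, Cmod (z - s0) < r ->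
        ex_derive g z /\ (g z * g z = radicand kappa z)%C.

(* Main.v *)
Require Import Defs.
From Stdlib Require Import Reals Lra Psatz Classical ClassicalEpsilon.
From Coquelicot Require Import Coquelicot.
Open Scope R_scope.
Lemma cont_pair {U : UniformSpace} (a b : U -> R) x : continuous a x -> continuous b x -> continuous (fun y => (a y, b y) : C) x.
Proof. intros Ha Hb P [eps HP].
assert (A := Ha (ball (a x) eps) (locally_ball _ _)).
assert (B := Hb (ball (b x) eps) (locally_ball _ _)).
unfold filtermap in A, B |- *. generalize (filter_and _ _ A B). apply filter_imp. intros y [H1 H2]. apply HP. split; auto. Qed.
Lemma cont_Re {U : UniformSpace} (f : U -> C) x : continuous f x -> continuous (fun y => Re (f y)) x.
Proof. intros H. apply continuous_comp; auto. destruct (f x). apply continuous_fst. Qed.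
Lemma cont_Im {U : UniformSpace} (f : U -> C) x : continuous f x -> continuous (fun y => Im (f y)) x.
Proof. intros H. apply continuous_comp; auto. destruct (f x). apply continuous_snd. Qed.
Lemma cont_Rmult {U : UniformSpace} (f g : U -> R) x : continuous f x -> continuous g x -> continuous (fun y => (f y * g y)) x.
Proof. intros. exact (@continuous_mult U R_AbsRing f g x H H0). Qed.
Lemma cont_Rplus {U : UniformSpace} (f g : U -> R) x : continuous f x -> continuous g x -> continuous (fun y => (f y + g y)) x.
Proof. intros. exact (@continuous_plus U R_AbsRing R_NormedModule f g x H H0). Qed.
Lemma cont_Ropp {U : UniformSpace} (f : U -> R) x : continuous f x -> continuous (fun y => - f y) x.
Proof. intros. exact (@continuous_opp U R_AbsRing R_NormedModule f x H). Qed.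
Lemma cont_Rinv {U : UniformSpace} (f : U -> R) x : continuous f x -> f x <> 0 -> continuous (fun y => / f y) x.
Proof. intros. apply continuous_comp; auto. apply continuous_Rinv; auto. Qed.
Lemma cont_sqrt {U : UniformSpace} (f : U -> R) x : continuous f x -> continuous (fun y => sqrt (f y)) x.
Proof. intros. apply continuous_comp; auto. apply continuous_sqrt. Qed.
Lemma cont_cos {U : UniformSpace} (f : U -> R) x : continuous f x -> continuous (fun y => cos (f y)) x.
Proof. intros. apply continuous_comp; auto. apply continuous_cos. Qed.
Lemma cont_sin {U : UniformSpace} (f : U -> R) x : continuous f x -> continuous (fun y => sin (f y)) x.
Proof. intros. apply continuous_comp; auto. apply continuous_sin. Qed.
Lemma cont_eta {U : UniformSpace} (f : U -> C) x : continuous (fun y => (Re (f y), Im (f y)) : C) x -> continuous f x.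
Proof. apply continuous_ext. intros y. destruct (f y); reflexivity. Qed.
Lemma cont_Cmult {U : UniformSpace} (f g : U -> C) x : continuous f x -> continuous g x -> continuous (fun y => (f y * g y)%C) x.
Proof. intros Hf Hg. apply cont_eta. simpl.
apply cont_pair.
 apply cont_Rplus. apply cont_Rmult; apply cont_Re; auto. apply cont_Ropp; apply cont_Rmult; apply cont_Im; auto.
 apply cont_Rplus; apply cont_Rmult. apply cont_Re; auto. apply cont_Im; auto. apply cont_Im; auto. apply cont_Re; auto. Qed.
Lemma cont_Cplus {U : UniformSpace} (f g : U -> C) x : continuous f x -> continuous g x -> continuous (fun y => (f y + g y)%C) x.
Proof. intros Hf Hg. apply cont_eta. simpl.
apply cont_pair; apply cont_Rplus; try apply cont_Re; try apply cont_Im; auto. Qed.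
Lemma cont_Copp {U : UniformSpace} (f : U -> C) x : continuous f x -> continuous (fun y => (- f y)%C) x.
Proof. intros Hf. apply cont_eta. simpl.
apply cont_pair; apply cont_Ropp; try apply cont_Re; try apply cont_Im; auto. Qed.
Lemma cont_const {U V : UniformSpace} (c : V) (x : U) : continuous (fun _ => c) x.
Proof. apply continuous_const. Qed.
Lemma cont_idC (x : C) : continuous (fun y : C => y) x.
Proof. apply continuous_id. Qed.
Lemma cont_Cinv {U : UniformSpace} (f : U -> C) x : continuous f x -> f x <> 0%C -> continuous (fun y => (/ f y)%C) x.
Proof. intros Hf Hn.
assert (Hd : Re (f x) ^ 2 + Im (f x) ^ 2 <> 0).
{ intro E. apply Hn. destruct (f x) as [p q]. simpl in E.
  assert (p = 0) by nra. assert (q = 0) by nra. subst. reflexivity. }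
apply cont_eta. simpl. unfold Rdiv.
assert (Hc : continuous (fun y => / (Re (f y) ^ 2 + Im (f y) ^ 2)) x).
{ apply cont_Rinv; auto. simpl. apply cont_Rplus; apply cont_Rmult; try apply cont_Rmult;
  try apply cont_Re; try apply cont_Im; try apply cont_const; auto. }
apply cont_pair; apply cont_Rmult; auto. apply cont_Re; auto. apply cont_Ropp; apply cont_Im; auto. Qed.
Lemma cont_Cmod {U : UniformSpace} (f : U -> C) x : continuous f x -> continuous (fun y => Cmod (f y)) x.
Proof. intros Hf. unfold Cmod. apply cont_sqrt. simpl. apply cont_Rplus; apply cont_Rmult; try apply cont_Rmult;
  try apply cont_Re; try apply cont_Im; try apply cont_const; auto. Qed.
Lemma locC (z : C) (P : C -> Prop) (e : R) : 0 < e -> (forall y, Cmod (y - z) < e -> P y) -> locally z P.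
Proof. intros He H. 
assert (A := @locally_ball_norm C_AbsRing C_NormedModule z (mkposreal e He)).
change (@locally (NormedModule.UniformSpace C_AbsRing C_NormedModule) z P).
revert A. apply filter_imp. intros y Hy. apply H. exact Hy. Qed.
Lemma locC_inv (z : C) P : locally z P -> exists e, 0 < e /\ forall y, Cmod (y - z) < e -> P y.
Proof. intros H.
change (@locally (NormedModule.UniformSpace C_AbsRing C_NormedModule) z P) in H.
apply (@locally_norm_le_locally C_AbsRing C_NormedModule z P) in H. destruct H as [e He]. exists e. split. apply cond_pos. intros y Hy; apply He; exact Hy. Qed.
Lemma loc_nonzero {U : UniformSpace} (f : U -> C) x : continuous f x -> f x <> 0%C -> locally x (fun y => f y <> 0%C).
Proof. intros Hf Hn.
assert (Hp : 0 < Cmod (f x)) by (apply Cmod_gt_0; auto).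
assert (H := Hf (fun w => Cmod (w - f x) < Cmod (f x)) (locC _ _ _ Hp (fun y h => h))).
unfold filtermap in H. revert H. apply filter_imp. intros y Hy E. rewrite E in Hy.
replace (0 - f x)%C with (- f x)%C in Hy by ring. rewrite Cmod_opp in Hy. lra. Qed.
Lemma loc_Re_pos {U : UniformSpace} (f : U -> C) x : continuous f x -> 0 < Re (f x) -> locally x (fun y => 0 < Re (f y)).
Proof. intros Hf Hp.
assert (H := Hf (fun w => Cmod (w - f x) < Re (f x)) (locC _ _ _ Hp (fun y h => h))).
unfold filtermap in H. revert H. apply filter_imp. intros y Hy.
assert (A := re_le_Cmod (f y - f x)%C). destruct (f y) as [p q]; destruct (f x) as [p' q']; simpl in *.
unfold Rabs in A; destruct Rcase_abs in A; lra. Qed.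
Lemma im_le_Cmod (c : C) : Rabs (Im c) <= Cmod c.
Proof. assert (A := Cmod2_alt c). assert (B := Cmod_ge_0 c).
unfold Rabs; destruct Rcase_abs; nra. Qed.
Lemma loc_Im_pos {U : UniformSpace} (f : U -> C) x : continuous f x -> 0 < Im (f x) -> locally x (fun y => 0 < Im (f y)).
Proof. intros Hf Hp.
assert (H := Hf (fun w => Cmod (w - f x) < Im (f x)) (locC _ _ _ Hp (fun y h => h))).
unfold filtermap in H. revert H. apply filter_imp. intros y Hy.
assert (A := im_le_Cmod (f y - f x)%C). destruct (f y) as [p q]; destruct (f x) as [p' q']; simpl in *.
unfold Rabs in A; destruct Rcase_abs in A; lra. Qed.

Definition psqrt (w : C) : C :=
  (sqrt ((Cmod w + Re w) / 2), Im w / (2 * sqrt ((Cmod w + Re w) / 2))).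

Lemma Cmod_sq (w : C) : Cmod w * Cmod w = Re w * Re w + Im w * Im w.
Proof. assert (A := Cmod2_alt w). simpl in A. nra. Qed.

Lemma psqrt_spec (w : C) : 0 < Cmod w + Re w -> (psqrt w * psqrt w = w)%C /\ 0 < Re (psqrt w).
Proof. intros H. unfold psqrt.
set (a := sqrt ((Cmod w + Re w) / 2)).
assert (Ha : 0 < a) by (apply sqrt_lt_R0; lra).
assert (Ha2 : a * a = (Cmod w + Re w) / 2) by (apply sqrt_sqrt; lra).
assert (Hm := Cmod_sq w).
destruct w as [x y]. simpl in *. split; [|exact Ha].
unfold Cmult; simpl. f_equal.
- assert (E : y / (2 * a) * (y / (2 * a)) = y * y / (4 * (a * a))) by (field; lra).
  rewrite E, Ha2. field_simplify; [| lra]. apply Rminus_diag_uniq. field_simplify; [|lra].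
  unfold Rdiv. apply Rmult_eq_0_compat_r. nra.
- field. lra. Qed.

Lemma psqrt_cont (w : C) : 0 < Cmod w + Re w -> continuous psqrt w.
Proof. intros H. unfold psqrt.
assert (Hs : continuous (fun y : C => sqrt ((Cmod y + Re y) / 2)) w).
{ apply cont_sqrt. unfold Rdiv. apply cont_Rmult; [|apply cont_const].
  apply cont_Rplus. apply cont_Cmod, cont_idC. apply cont_Re, cont_idC. }
apply cont_pair; auto. unfold Rdiv. apply cont_Rmult. apply cont_Im, cont_idC.
apply cont_Rinv. apply cont_Rmult; auto. apply cont_const.
assert (0 < sqrt ((Cmod w + Re w) / 2)) by (apply sqrt_lt_R0; lra). lra. Qed.

Lemma Cmult_eq_0_l (a b : C) : (a * b = 0)%C -> b <> 0%C -> a = 0%C.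
Proof. intros E N. replace a with (a * b / b)%C by (field; auto). rewrite E. field. auto. Qed.

Lemma Re_pos_nz (w : C) : 0 < Re w -> w <> 0%C.
Proof. intros H E. rewrite E in H. simpl in H. lra. Qed.

Lemma sqrt_unique (v w : C) : (v * v = w * w)%C -> 0 < Re v -> 0 < Re w -> v = w.
Proof. intros E Hv Hw.
assert (E2 : ((v - w) * (v + w) = 0)%C).
{ replace ((v - w) * (v + w))%C with (v * v - w * w)%C by ring. rewrite E. ring. }
apply Cmult_eq_0_l in E2. replace v with ((v - w) + w)%C by ring. rewrite E2. ring.
apply Re_pos_nz. destruct v, w; simpl in *; lra. Qed.

Lemma csqrt_eq (z w : C) : (w * w = z)%C -> 0 < Re w -> csqrt z = w.
Proof. intros E H. unfold csqrt.
destruct (epsilon_spec (inhabits (RtoC 0)) (fun w => (w * w = z)%C /\ 0 < Re w) (ex_intro _ w (conj E H))) as [E1 H1].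
apply sqrt_unique; auto. rewrite E1, E. reflexivity. Qed.

Lemma csqrt_psqrt (z : C) : 0 < Cmod z + Re z -> csqrt z = psqrt z.
Proof. intros H. destruct (psqrt_spec z H). apply csqrt_eq; auto. Qed.

Lemma csqrt_spec (z : C) : 0 < Cmod z + Re z -> (csqrt z * csqrt z = z)%C /\ 0 < Re (csqrt z).
Proof. intros H. rewrite csqrt_psqrt; auto. apply psqrt_spec; auto. Qed.

Lemma Cmod_Re_pos (z : C) : Im z <> 0 \/ 0 < Re z -> 0 < Cmod z + Re z.
Proof. intros H. assert (A := Cmod_sq z). assert (B := Cmod_ge_0 z).
destruct z as [x y]; simpl in *. destruct H. 
- assert (Cmod (x,y) * Cmod (x,y) > x * x) by (assert (0 < y*y) by (apply Rsqr_pos_lt; auto); nra). nra.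
- nra. Qed.

Lemma loc_to_abs (z : C) (P : C -> Prop) : @locally C_UniformSpace z P -> @locally (AbsRing_UniformSpace C_AbsRing) z P.
Proof. intros H. destruct (locC_inv z P H) as [e [He H']]. exists (mkposreal e He). intros y Hy. apply H'. exact Hy. Qed.

Lemma abs_to_loc (z : C) (P : C -> Prop) : @locally (AbsRing_UniformSpace C_AbsRing) z P -> @locally C_UniformSpace z P.
Proof. intros [e He]. apply (locC z P e). apply cond_pos. intros y Hy. apply He. exact Hy. Qed.

Lemma cont_from_abs (g : C -> C) z : @continuous (AbsRing_UniformSpace C_AbsRing) C_UniformSpace g z -> @continuous C_UniformSpace C_UniformSpace g z.
Proof. intros H P HP. apply abs_to_loc. apply (H P HP). Qed.

Definition cdiff (f : C -> C) (z : C) : Prop :=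
  exists D : C -> C, continuous D z /\ locally z (fun y => (f y - f z = (y - z) * D y)%C).

Lemma cdiff_derive f z : cdiff f z -> ex_derive f z.
Proof. intros [D [HD Hl]]. exists (D z). split.
- apply is_linear_scal_l.
- intros x Hx. apply (@is_filter_lim_locally_unique C_AbsRing (AbsRing_NormedModule C_AbsRing)) in Hx. subst x.
  intros eps.
  assert (Hc := HD (fun w => Cmod (w - D z) < eps) (locC _ _ _ (cond_pos eps) (fun y h => h))).
  unfold filtermap in Hc.
  generalize (filter_and _ _ (loc_to_abs _ _ Hc) (loc_to_abs _ _ Hl)). apply filter_imp. intros y [H1 H2].
  change (Cmod ((f y - f z) - (y - z) * D z)%C <= eps * Cmod (y - z)%C).
  rewrite H2. replace ((y - z) * D y - (y - z) * D z)%C with ((y - z) * (D y - D z))%C by ring.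
  rewrite Cmod_mult. assert (A := Cmod_ge_0 (y - z)%C). nra. Qed.

Lemma cdiff_cont f z : cdiff f z -> continuous f z.
Proof. intros [D [HD Hl]].
apply continuous_ext_loc with (fun y => (f z + (y - z) * D y)%C).
- revert Hl. apply filter_imp. intros y H. cbv beta. rewrite <- H. change (@eq C (f z + (f y - f z))%C (f y)). ring.
- apply cont_Cplus. apply cont_const. apply cont_Cmult; auto.
  apply cont_Cplus. apply cont_idC. apply cont_const. Qed.

Lemma cdiff_ext_loc f g z : locally z (fun y => f y = g y) -> cdiff f z -> cdiff g z.
Proof. intros E [D [HD Hl]]. exists D. split; auto.
assert (Ez := locally_singleton _ _ E). simpl in Ez.
generalize (filter_and _ _ E Hl). apply filter_imp. intros y [H1 H2].
rewrite <- H1, <- Ez. auto. Qed.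

Lemma cdiff_const (c z : C) : cdiff (fun _ => c) z.
Proof. exists (fun _ => 0%C). split. apply cont_const. apply filter_forall. intros; ring. Qed.

Lemma cdiff_id (z : C) : cdiff (fun y => y) z.
Proof. exists (fun _ => 1%C). split. apply cont_const. apply filter_forall. intros; ring. Qed.

Lemma cdiff_plus f g z : cdiff f z -> cdiff g z -> cdiff (fun y => (f y + g y)%C) z.
Proof. intros [D1 [H1 L1]] [D2 [H2 L2]]. exists (fun y => (D1 y + D2 y)%C). split.
apply cont_Cplus; auto.
generalize (filter_and _ _ L1 L2). apply filter_imp. intros y [A B].
replace (f y + g y - (f z + g z))%C with ((f y - f z) + (g y - g z))%C by ring.
rewrite A, B. ring. Qed.

Lemma cdiff_mult f g z : cdiff f z -> cdiff g z -> cdiff (fun y => (f y * g y)%C) z.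
Proof. intros Hf Hg. assert (Cg := cdiff_cont _ _ Hg).
destruct Hf as [D1 [H1 L1]]. destruct Hg as [D2 [H2 L2]].
exists (fun y => (D1 y * g y + f z * D2 y)%C). split.
apply cont_Cplus; apply cont_Cmult; auto; apply cont_const.
generalize (filter_and _ _ L1 L2). apply filter_imp. intros y [A B].
replace (f y * g y - f z * g z)%C with ((f y - f z) * g y + f z * (g y - g z))%C by ring.
rewrite A, B. ring. Qed.

Lemma cdiff_inv f z : cdiff f z -> f z <> 0%C -> cdiff (fun y => (/ f y)%C) z.
Proof. intros Hf Hn. assert (Cf := cdiff_cont _ _ Hf).
assert (Nz := loc_nonzero _ _ Cf Hn).
destruct Hf as [D [HD L]].
exists (fun y => (- D y * / (f y * f z))%C). split.
apply cont_Cmult. apply cont_Copp; auto. apply cont_Cinv. apply cont_Cmult; auto; apply cont_const.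
apply Cmult_neq_0; auto.
generalize (filter_and _ _ L Nz). apply filter_imp. intros y [A B].
replace ((y - z) * (- D y * / (f y * f z)))%C with (- ((y - z) * D y) * / (f y * f z))%C by ring.
rewrite <- A. field. split; auto. Qed.

Lemma cdiff_sqrt (S Q : C -> C) z : continuous S z -> S z <> 0%C ->
  locally z (fun y => (S y * S y = Q y)%C) -> cdiff Q z -> cdiff S z.
Proof. intros HS Hn Hsq [D [HD L]].
assert (H2 : (S z + S z)%C <> 0%C).
{ intro E. apply Hn. assert (T : RtoC 2 <> 0%C) by (intro E2; injection E2; lra).
  replace (S z) with ((S z + S z) / 2)%C by (field; exact T). rewrite E. field; exact T. }
assert (Cs : continuous (fun y => (S y + S z)%C) z) by (apply cont_Cplus; auto; apply cont_const).
assert (Nz := loc_nonzero _ _ Cs H2).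
assert (Ez := locally_singleton _ _ Hsq). simpl in Ez.
exists (fun y => (D y * / (S y + S z))%C). split.
apply cont_Cmult; auto. apply cont_Cinv; auto.
generalize (filter_and _ _ (filter_and _ _ L Nz) Hsq). apply filter_imp. intros y [[A B] E].
replace ((y - z) * (D y * / (S y + S z)))%C with (((y - z) * D y) * / (S y + S z))%C by ring.
rewrite <- A, <- E, <- Ez. field. auto. Qed.

Lemma loc_pos_R {U : UniformSpace} (f : U -> R) x : continuous f x -> 0 < f x -> locally x (fun y => 0 < f y).
Proof. intros Hf Hp. apply Hf. apply (open_gt 0 (f x) Hp). Qed.

Lemma cdiff_radicand kappa z : cdiff (radicand kappa) z.
Proof. exists (fun y => (RtoC (kappa ^ 2) * (y + z))%C). split.
apply cont_Cmult. apply cont_const. apply cont_Cplus. apply cont_idC. apply cont_const.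
apply filter_forall. intros y. unfold radicand. ring. Qed.

Lemma cont_radicand kappa z : continuous (radicand kappa) z.
Proof. apply cdiff_cont, cdiff_radicand. Qed.

Lemma cdiff_psqrt_comp h z : cdiff h z -> 0 < Cmod (h z) + Re (h z) -> cdiff (fun y => psqrt (h y)) z.
Proof. intros Hh Hp. assert (Ch := cdiff_cont _ _ Hh).
apply cdiff_sqrt with h; auto.
- apply continuous_comp; auto. apply psqrt_cont; auto.
- apply Re_pos_nz. apply psqrt_spec; auto.
- assert (L : locally z (fun y => 0 < Cmod (h y) + Re (h y))).
  { apply loc_pos_R; auto. apply cont_Rplus. apply cont_Cmod; auto. apply cont_Re; auto. }
  revert L. apply filter_imp. intros y Hy. apply psqrt_spec; auto. Qed.

Lemma Re_radicand kappa s : Re (radicand kappa s) = 1 + kappa ^ 2 * (Re s * Re s - Im s * Im s).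
Proof. destruct s; unfold radicand; simpl; ring. Qed.
Lemma Im_radicand kappa s : Im (radicand kappa s) = kappa ^ 2 * (2 * Re s * Im s).
Proof. destruct s; unfold radicand; simpl; ring. Qed.

Lemma radicand_ok kappa s : 0 < kappa -> 0 < Re s -> 0 < Cmod (radicand kappa s) + Re (radicand kappa s).
Proof. intros Hk Hs. apply Cmod_Re_pos. rewrite Re_radicand, Im_radicand.
destruct (Req_dec (Im s) 0) as [E|E].
- right. rewrite E. assert (0 < kappa ^ 2) by (apply pow_lt; auto). nra.
- left. intro F. assert (0 < kappa ^ 2) by (apply pow_lt; auto).
  assert (2 * Re s * Im s = 0). { apply (Rmult_eq_reg_l (kappa ^ 2)); lra. }
  assert (Re s * Im s = 0) by lra. apply Rmult_integral in H1. lra. Qed.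

Lemma cdiff_S kappa z : 0 < kappa -> 0 < Re z -> cdiff (fun y => csqrt (radicand kappa y)) z.
Proof. intros Hk Hz.
apply cdiff_ext_loc with (fun y => psqrt (radicand kappa y)).
- assert (L := loc_Re_pos (fun y => y) z (cont_idC z) Hz). revert L. apply filter_imp.
  intros y Hy. symmetry. apply csqrt_psqrt. apply radicand_ok; auto.
- apply cdiff_psqrt_comp. apply cdiff_radicand. apply radicand_ok; auto. Qed.

Lemma Pden_nz ell kappa t2 s : 0 < ell -> 0 < kappa -> 0 <= t2 -> 0 < Re s -> Pden ell kappa t2 s <> 0%C.
Proof. intros Hl Hk Ht Hs E.
destruct (csqrt_spec (radicand kappa s) (radicand_ok kappa s Hk Hs)) as [_ Hw].
unfold Pden in E. revert E Hw. generalize (csqrt (radicand kappa s)). intros [u v] E Hw.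
destruct s as [x y]. simpl in Hs, Hw.
assert (E1 := f_equal fst E). assert (E2 := f_equal snd E). simpl in E1, E2.
assert (K : x * (t2 * (x * x - y * y) + ell * (x * u - y * v) + 1) + y * (2 * t2 * x * y + ell * (x * v + y * u))
  = x * (t2 * (x * x + y * y) + 1) + ell * u * (x * x + y * y)) by ring.
assert (E1' : t2 * (x * x - y * y) + ell * (x * u - y * v) + 1 = 0) by nra.
assert (E2' : 2 * t2 * x * y + ell * (x * v + y * u) = 0) by nra.
rewrite E1', E2' in K. assert (0 <= x * x + y * y) by nra.
assert (0 < x * (t2 * (x * x + y * y) + 1)) by (apply Rmult_lt_0_compat; [lra| assert (0 <= t2 * (x * x + y * y)) by (apply Rmult_le_pos; lra); lra]).
assert (0 <= ell * u * (x * x + y * y)) by (apply Rmult_le_pos; nra). lra. Qed.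

Lemma part1 ell kappa t2 s : 0 < ell -> 0 < kappa -> 0 <= t2 -> 0 < Re s ->
  Pden ell kappa t2 s <> 0%C /\ ex_derive (Hhat ell kappa t2) s.
Proof. intros Hl Hk Ht Hs. split. apply Pden_nz; auto.
apply cdiff_derive. unfold Hhat, Cdiv.
assert (HS := cdiff_S kappa s Hk Hs).
apply cdiff_mult.
- unfold Hnum. apply cdiff_plus. apply cdiff_mult. apply cdiff_const. apply cdiff_id.
  apply cdiff_mult. apply cdiff_const. exact HS.
- apply cdiff_inv. unfold Pden. apply cdiff_plus. apply cdiff_plus.
  apply cdiff_mult. apply cdiff_mult. apply cdiff_const. apply cdiff_id. apply cdiff_id.
  apply cdiff_mult. apply cdiff_mult. apply cdiff_id. apply cdiff_const. exact HS.
  apply cdiff_const. apply Pden_nz; auto. Qed.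

Definition clamp (ell x : R) : R :=
  let m := (ell + x - Rabs (ell - x)) / 2 in (m + Rabs m) / 2.

Lemma clamp_range ell x : 0 <= ell -> 0 <= clamp ell x <= ell.
Proof. intros H. unfold clamp. unfold Rabs; repeat destruct Rcase_abs; lra. Qed.

Lemma clamp_id ell x : 0 <= x <= ell -> clamp ell x = x.
Proof. intros H. unfold clamp. unfold Rabs; repeat destruct Rcase_abs; lra. Qed.

Lemma clamp_cont ell x : continuous (clamp ell) x.
Proof. unfold clamp. unfold Rdiv.
assert (Hm : continuous (fun x => (ell + x - Rabs (ell - x)) * / 2) x).
{ apply cont_Rmult; [|apply cont_const]. apply cont_Rplus. apply cont_Rplus. apply cont_const. apply continuous_id.
  apply cont_Ropp. apply continuous_Rabs_comp. apply cont_Rplus. apply cont_const. apply cont_Ropp. apply continuous_id. }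
apply cont_Rmult; [|apply cont_const]. apply cont_Rplus; auto. apply continuous_Rabs_comp; auto. Qed.

Lemma t2_facts (ell kappa tau_buoy : R) (h_eq : R -> R) :
  0 < ell -> 0 < kappa -> 0 < tau_buoy ->
  (forall x, 0 <= x <= ell ->
     filterlim h_eq (within (fun y => 0 <= y <= ell) (locally x))
       (locally (h_eq x))) ->
  (forall x, 0 <= x <= ell -> 0 < h_eq x < 1) ->
  kappa ^ 2 < tau_mu2 ell kappa tau_buoy h_eq.
Proof. intros Hl Hk Ht Hc Hh. unfold tau_mu2.
set (g := fun x => x ^ 2 / h_eq (clamp ell x)).
assert (Hcomp : forall z, continuous (fun x => h_eq (clamp ell x)) z).
{ intros z P HP. unfold filtermap in *.
  assert (Hr := clamp_range ell z (Rlt_le _ _ Hl)).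
  specialize (Hc _ Hr P HP). unfold filtermap, within in Hc.
  assert (C := clamp_cont ell z _ Hc). unfold filtermap in C. revert C. apply filter_imp.
  intros y Hy. apply Hy. apply clamp_range; lra. }
assert (Hg : ex_RInt g 0 ell).
{ apply (@ex_RInt_continuous R_CompleteNormedModule). intros z _. unfold g, Rdiv. apply cont_Rmult.
  apply continuous_ext with (fun x => x * (x * 1)). intros; simpl; ring.
  apply cont_Rmult. apply continuous_id. apply cont_Rmult. apply continuous_id. apply cont_const.
  apply cont_Rinv. apply Hcomp. assert (Hr := clamp_range ell z (Rlt_le _ _ Hl)). specialize (Hh _ Hr). lra. }
assert (E : RInt (fun x => x ^ 2 / h_eq x) 0 ell = RInt g 0 ell).
{ apply RInt_ext. intros x Hx. rewrite Rmin_left in Hx by lra. rewrite Rmax_right in Hx by lra.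
  unfold g. rewrite clamp_id; auto. lra. }
assert (I0 : 0 <= RInt g 0 ell).
{ apply RInt_ge_0; auto. lra. intros x Hx. unfold g. rewrite clamp_id by lra.
  assert (Hh' := Hh x ltac:(lra)). apply Rmult_le_pos. apply pow2_ge_0. apply Rlt_le, Rinv_0_lt_compat; lra. }
rewrite E.
assert (Hhl := Hh ell ltac:(lra)).
assert (Hi : 1 < / h_eq ell). { rewrite <- Rinv_1. apply Rinv_lt_contravar; lra. }
assert (0 < kappa ^ 2) by (apply pow_lt; auto).
assert (0 <= / ell * RInt g 0 ell) by (apply Rmult_le_pos; auto; apply Rlt_le, Rinv_0_lt_compat; auto).
assert (0 < tau_buoy ^ 2) by (apply pow_lt; auto).
unfold Rdiv. nra. Qed.

Lemma axis_nz ell kappa t2 y w : 0 < kappa -> kappa ^ 2 * (y * y) < 1 ->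
  (w * w = radicand kappa (0, y))%C -> 0 < Re w ->
  (RtoC t2 * (0, y) * (0, y) + (0, y) * RtoC ell * w + RtoC 1)%C <> 0%C -> True.
Proof. auto. Qed.

Lemma axis_nz' ell kappa t2 y w : 0 < ell -> kappa ^ 2 * (y * y) < 1 ->
  (w * w = radicand kappa (0, y))%C -> 0 < Re w ->
  (RtoC t2 * (0, y) * (0, y) + (0, y) * RtoC ell * w + RtoC 1)%C <> 0%C.
Proof. intros Hl Hy E Hw. destruct w as [u v]. simpl in Hw.
assert (E2 := f_equal snd E). unfold radicand in E2. simpl in E2.
assert (Hv : v = 0) by nra. subst v.
intro F. assert (F1 := f_equal fst F). assert (F2 := f_equal snd F). simpl in F1, F2.
assert (Y : y * (ell * u) = 0) by lra. apply Rmult_integral in Y. destruct Y as [Y|Y]. subst y. lra. assert (0 < ell * u) by (apply Rmult_lt_0_compat; lra). lra. Qed.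

Lemma kappa_y_lt kappa y : 0 < kappa -> Rabs y < / kappa -> kappa ^ 2 * (y * y) < 1.
Proof. intros Hk H. assert (A : kappa * Rabs y < 1).
{ apply (Rmult_lt_compat_l kappa) in H; auto. rewrite Rinv_r in H; lra. }
assert (B : Rabs y * Rabs y = y * y) by (unfold Rabs; destruct Rcase_abs; ring).
assert (0 <= Rabs y) by apply Rabs_pos. replace (kappa ^ 2 * (y * y)) with ((kappa * Rabs y) * (kappa * Rabs y)) by (rewrite <- B; ring). assert (0 <= kappa * Rabs y) by (apply Rmult_le_pos; lra). assert (T : (kappa * Rabs y) * (kappa * Rabs y) < 1 * 1) by (apply Rmult_le_0_lt_compat; lra). lra. Qed.

Lemma part3 ell kappa t2 s : 0 < ell -> 0 < kappa -> 0 <= t2 ->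
  ~ on_cuts kappa s -> Pden ell kappa t2 s = 0%C -> Re s < 0.
Proof. intros Hl Hk Ht Hc E.
destruct (Rlt_or_le (Re s) 0) as [H|H]; auto. exfalso.
destruct (Rle_lt_or_eq_dec 0 (Re s) H) as [H'|H'].
- apply (Pden_nz ell kappa t2 s); auto.
- destruct s as [x y]. simpl in H'. subst x.
  assert (Hy : Rabs y < / kappa).
  { destruct (Rlt_or_le (Rabs y) (/ kappa)); auto. exfalso. apply Hc. split; simpl; auto. }
  assert (Hk2 := kappa_y_lt kappa y Hk Hy).
  assert (Hq : 0 < Cmod (radicand kappa (0, y)) + Re (radicand kappa (0, y))).
  { apply Cmod_Re_pos. right. rewrite Re_radicand. simpl. nra. }
  destruct (csqrt_spec _ Hq) as [E1 E2].
  apply (axis_nz' ell kappa t2 y (csqrt (radicand kappa (0, y)))); auto. Qed.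

Definition pup (w : C) : C := (sqrt ((Cmod w + Re w) / 2), sqrt ((Cmod w - Re w) / 2)).
Definition pdn (w : C) : C := (sqrt ((Cmod w + Re w) / 2), - sqrt ((Cmod w - Re w) / 2)).

Lemma Cmod_gt_abs_Re (w : C) : Im w <> 0 -> Re w < Cmod w /\ - Re w < Cmod w.
Proof. intros H. assert (A := Cmod_sq w). assert (B := Cmod_ge_0 w).
destruct w as [x y]; simpl in *. assert (0 < y * y) by (apply Rsqr_pos_lt; auto). split; nra. Qed.

Lemma pupdn_aux (w : C) : Im w <> 0 ->
  let u := sqrt ((Cmod w + Re w) / 2) in let v := sqrt ((Cmod w - Re w) / 2) in
  0 < u /\ 0 < v /\ u * u - v * v = Re w /\ (u * v) * (u * v) = Im w * Im w / 4.
Proof. intros H u v. destruct (Cmod_gt_abs_Re w H) as [A B].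
assert (Hu : 0 < u) by (apply sqrt_lt_R0; lra). assert (Hv : 0 < v) by (apply sqrt_lt_R0; lra).
assert (Hu2 : u * u = (Cmod w + Re w) / 2) by (apply sqrt_sqrt; lra).
assert (Hv2 : v * v = (Cmod w - Re w) / 2) by (apply sqrt_sqrt; lra).
assert (M := Cmod_sq w).
split; auto. split; auto. split. rewrite Hu2, Hv2. field.
replace (u * v * (u * v)) with ((u * u) * (v * v)) by ring. rewrite Hu2, Hv2. 
replace ((Cmod w + Re w) / 2 * ((Cmod w - Re w) / 2)) with ((Cmod w * Cmod w - Re w * Re w) / 4) by field.
rewrite M. field. Qed.

Lemma pup_psqrt (w : C) : 0 < Im w -> psqrt w = pup w.
Proof. intros H. assert (N : Im w <> 0) by lra.
assert (P1 : 0 < Cmod w + Re w) by (apply Cmod_Re_pos; auto).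
destruct (psqrt_spec w P1) as [S1 S2].
destruct (pupdn_aux w N) as [Hu [Hv [E1 E2]]].
apply sqrt_unique; auto. rewrite S1. unfold pup.
set (u := sqrt ((Cmod w + Re w) / 2)) in *. set (v := sqrt ((Cmod w - Re w) / 2)) in *.
assert (E3 : u * v = Im w / 2).
{ assert (0 < u * v) by (apply Rmult_lt_0_compat; auto).
  assert ((u * v - Im w / 2) * (u * v + Im w / 2) = 0) by (replace ((u * v - Im w / 2) * (u * v + Im w / 2)) with (u * v * (u * v) - Im w / 2 * (Im w / 2)) by ring; rewrite E2; field).
  apply Rmult_integral in H1. destruct H1; lra. }
destruct w as [x y]. unfold Cmult. simpl in *. f_equal; lra. Qed.

Lemma pdn_psqrt (w : C) : Im w < 0 -> psqrt w = pdn w.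
Proof. intros H. assert (N : Im w <> 0) by lra.
assert (P1 : 0 < Cmod w + Re w) by (apply Cmod_Re_pos; auto).
destruct (psqrt_spec w P1) as [S1 S2].
destruct (pupdn_aux w N) as [Hu [Hv [E1 E2]]].
apply sqrt_unique; auto. rewrite S1. unfold pdn.
set (u := sqrt ((Cmod w + Re w) / 2)) in *. set (v := sqrt ((Cmod w - Re w) / 2)) in *.
assert (E3 : u * v = - Im w / 2).
{ assert (0 < u * v) by (apply Rmult_lt_0_compat; auto).
  assert ((u * v + Im w / 2) * (u * v - Im w / 2) = 0) by (replace ((u * v + Im w / 2) * (u * v - Im w / 2)) with (u * v * (u * v) - Im w / 2 * (Im w / 2)) by ring; rewrite E2; field).
  apply Rmult_integral in H1. destruct H1; lra. }
destruct w as [x y]. unfold Cmult. simpl in *. f_equal; lra. Qed.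

Lemma pup_cont w : continuous pup w.
Proof. unfold pup, Rdiv. apply cont_pair; apply cont_sqrt; apply cont_Rmult; try apply cont_const;
apply cont_Rplus; try apply cont_Ropp; try apply cont_Cmod; try apply cont_Re; apply cont_idC. Qed.

Lemma pdn_cont w : continuous pdn w.
Proof. unfold pdn, Rdiv. apply cont_pair; try apply cont_Ropp; apply cont_sqrt; apply cont_Rmult; try apply cont_const;
apply cont_Rplus; try apply cont_Ropp; try apply cont_Cmod; try apply cont_Re; apply cont_idC. Qed.

Definition Pform ell kappa t2 (Sq : C -> C) (z : C) : C :=
  (RtoC t2 * z * z + z * RtoC ell * Sq (radicand kappa z) + RtoC 1)%C.

Lemma cont_Pform ell kappa t2 Sq z : continuous Sq (radicand kappa z) -> continuous (Pform ell kappa t2 Sq) z.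
Proof. intros H. unfold Pform.
apply cont_Cplus; [|apply cont_const]. apply cont_Cplus.
apply cont_Cmult; [|apply cont_idC]. apply cont_Cmult; [apply cont_const|apply cont_idC].
apply cont_Cmult. apply cont_Cmult; [apply cont_idC|apply cont_const].
apply continuous_comp; auto. apply cont_radicand. Qed.

Lemma lim_within_Re (F G : C -> C) p : continuous F p ->
  locally p (fun z => 0 < Re z -> F z = G z) ->
  filterlim G (within (fun z : C => 0 < Re z) (locally p)) (locally (F p)).
Proof. intros Hc Hl. apply filterlim_ext_loc with F. exact Hl.
eapply filterlim_filter_le_1; [apply filter_le_within | exact Hc]. Qed.

Lemma Pden_Pform ell kappa t2 Sq z : 0 < kappa -> 0 < Re z -> Sq (radicand kappa z) = psqrt (radicand kappa z) ->
  Pform ell kappa t2 Sq z = Pden ell kappa t2 z.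
Proof. intros Hk Hz E. unfold Pform, Pden. rewrite E, csqrt_psqrt; auto. apply radicand_ok; auto. Qed.

Lemma part4 ell kappa t2 y : 0 < ell -> 0 < kappa -> kappa ^ 2 < t2 ->
  exists L : C, L <> RtoC 0 /\
     filterlim (Pden ell kappa t2)
       (within (fun z : C => 0 < Re z) (locally ((0, y) : C))) (locally L).
Proof. intros Hl Hk Ht.
assert (Hk2 : 0 < kappa ^ 2) by (apply pow_lt; auto).
destruct (Rlt_or_le (Rabs y) (/ kappa)) as [Hy|Hy].
- assert (Hky := kappa_y_lt kappa y Hk Hy).
  assert (Hq : 0 < Cmod (radicand kappa (0, y)) + Re (radicand kappa (0, y))).
  { apply Cmod_Re_pos. right. rewrite Re_radicand. simpl. nra. }
  exists (Pform ell kappa t2 psqrt (0, y)). split.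
  + destruct (psqrt_spec _ Hq). apply (axis_nz' ell kappa); auto.
  + apply lim_within_Re. apply cont_Pform. apply psqrt_cont; auto.
    apply filter_forall. intros z Hz. apply Pden_Pform; auto.
- assert (Hky : 1 <= kappa ^ 2 * (y * y)).
  { assert (A : 1 <= kappa * Rabs y).
    { apply (Rmult_le_compat_l kappa) in Hy; [|lra]. rewrite Rinv_r in Hy; lra. }
    assert (B : Rabs y * Rabs y = y * y) by (unfold Rabs; destruct Rcase_abs; ring).
    replace (kappa ^ 2 * (y * y)) with ((kappa * Rabs y) * (kappa * Rabs y)) by (rewrite <- B; ring). nra. }
  set (m := kappa ^ 2 * (y * y) - 1).
  assert (Rq : Re (radicand kappa (0, y)) = - m) by (rewrite Re_radicand; simpl; unfold m; ring).
  assert (Iq : Im (radicand kappa (0, y)) = 0) by (rewrite Im_radicand; simpl; ring).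
  assert (Cq : Cmod (radicand kappa (0, y)) = m).
  { assert (M := Cmod_sq (radicand kappa (0, y))). assert (M0 := Cmod_ge_0 (radicand kappa (0, y))).
    rewrite Rq, Iq in M. assert (0 <= m) by (unfold m; lra). nra. }
  assert (Hm : 0 <= m) by (unfold m; lra).
  set (r := sqrt m). assert (Hr : 0 <= r) by apply sqrt_pos.
  assert (Hy2 : 1 < t2 * (y * y)) by nra.
  assert (Y : 0 < y \/ y < 0).
  { destruct (Rlt_or_le 0 y); auto. right. unfold Rabs in Hy. destruct Rcase_abs in Hy.
    lra. assert (0 < / kappa) by (apply Rinv_0_lt_compat; auto). lra. }
  destruct Y as [Y|Y].
  + exists (Pform ell kappa t2 pup (0, y)). split.
    * unfold Pform, pup. rewrite Cq, Rq. replace ((m + - m) / 2) with 0 by field. replace ((m - - m) / 2) with m by field.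
      rewrite sqrt_0. fold r. intro E. assert (E1 := f_equal fst E). simpl in E1.
      assert (0 <= y * ell * r) by (apply Rmult_le_pos; [apply Rmult_le_pos|]; lra). nra.
    * apply lim_within_Re. apply cont_Pform. apply pup_cont.
      assert (L := loc_Im_pos (fun z => z) (0, y) (cont_idC _) Y). revert L. apply filter_imp.
      intros z Hz Hz'. apply Pden_Pform; auto. symmetry. apply pup_psqrt. rewrite Im_radicand.
      assert (0 < Re z * Im z) by (apply Rmult_lt_0_compat; auto). nra.
  + exists (Pform ell kappa t2 pdn (0, y)). split.
    * unfold Pform, pdn. rewrite Cq, Rq. replace ((m + - m) / 2) with 0 by field. replace ((m - - m) / 2) with m by field.
      rewrite sqrt_0. fold r. intro E. assert (E1 := f_equal fst E). simpl in E1.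
      assert (0 <= (- y) * ell * r) by (apply Rmult_le_pos; [apply Rmult_le_pos|]; lra). nra.
    * apply lim_within_Re. apply cont_Pform. apply pdn_cont.
      assert (L := loc_Im_pos (fun z => (- z)%C) (0, y) (cont_Copp _ _ (cont_idC _)) ltac:(simpl; lra)). revert L. apply filter_imp.
      intros z Hz Hz'. apply Pden_Pform; auto. symmetry. apply pdn_psqrt. rewrite Im_radicand.
      destruct z as [a b]. simpl in *. assert (0 < a * (- b)) by (apply Rmult_lt_0_compat; lra). nra.
Qed.

Lemma exists_csqrt (z : C) : exists c : C, (c * c = z)%C.
Proof. destruct (Rlt_or_le 0 (Cmod z + Re z)) as [H|H].
- exists (psqrt z). apply psqrt_spec; auto.
- assert (M := Cmod_sq z). assert (M0 := Cmod_ge_0 z).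
  destruct z as [x y]; simpl in *.
  assert (Hc : Cmod (x, y) = - x) by (assert (A := re_le_Cmod (x, y)); simpl in A; unfold Rabs in A; destruct Rcase_abs in A; lra).
  rewrite Hc in M. assert (Hy : y = 0) by nra. subst y.
  exists (0, sqrt (- x)). unfold Cmult; simpl.
  assert (sqrt (- x) * sqrt (- x) = - x) by (apply sqrt_sqrt; lra). f_equal; nra. Qed.

Lemma radicand_nz kappa s0 : 0 < kappa -> s0 <> (0, / kappa) -> s0 <> (0, - / kappa) -> radicand kappa s0 <> 0%C.
Proof. intros Hk N1 N2 E.
assert (E1 := f_equal Re E). assert (E2 := f_equal Im E). rewrite Re_radicand in E1. rewrite Im_radicand in E2. simpl in E1, E2.
destruct s0 as [x y]. simpl in *.
assert (Hk2 : 0 < kappa ^ 2) by (apply pow_lt; auto).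
assert (xy : x * y = 0). { apply (Rmult_eq_reg_l (2 * kappa ^ 2)). lra. lra. }
apply Rmult_integral in xy. destruct xy as [X|Y].
- subst x. assert (K : (kappa * y - 1) * (kappa * y + 1) = 0) by (simpl in E1; nra).
  apply Rmult_integral in K. destruct K as [K|K].
  + apply N1. f_equal. apply (Rmult_eq_reg_l kappa). rewrite Rinv_r; lra. lra.
  + apply N2. f_equal. apply (Rmult_eq_reg_l kappa). field_simplify; lra. lra.
- subst y. assert (0 <= kappa ^ 2 * (x * x)) by (apply Rmult_le_pos; nra). nra. Qed.

Lemma regular kappa s0 : 0 < kappa -> radicand kappa s0 <> 0%C -> sqrt_regular_point kappa s0.
Proof. intros Hk Hn. set (q0 := radicand kappa s0).
destruct (exists_csqrt q0) as [c Hc].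
set (h := fun z => (radicand kappa z * / q0)%C).
assert (Hh : forall z, cdiff h z). { intros z. apply cdiff_mult. apply cdiff_radicand. apply cdiff_const. }
assert (H1 : Re (h s0) = 1). { unfold h. fold q0. replace (q0 * / q0)%C with (RtoC 1) by (field; auto). reflexivity. }
assert (L := loc_Re_pos h s0 (cdiff_cont _ _ (Hh s0)) ltac:(lra)).
destruct (locC_inv _ _ L) as [r [Hr Hr']].
exists r. split; auto. exists (fun z => (c * psqrt (h z))%C). intros z Hz.
specialize (Hr' z Hz). assert (P : 0 < Cmod (h z) + Re (h z)) by (apply Cmod_Re_pos; auto).
split.
- apply cdiff_derive. apply cdiff_mult. apply cdiff_const. apply cdiff_psqrt_comp; auto.
- destruct (psqrt_spec _ P) as [S _].
  replace (c * psqrt (h z) * (c * psqrt (h z)))%C with ((c * c) * (psqrt (h z) * psqrt (h z)))%C by ring.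
  rewrite S, Hc. unfold h. fold q0. field. auto. Qed.

Lemma Cmod_circle rho t : 0 <= rho -> Cmod (rho * cos t, rho * sin t) = rho.
Proof. intros H. assert (M := Cmod_sq (rho * cos t, rho * sin t)). assert (M0 := Cmod_ge_0 (rho * cos t, rho * sin t)).
simpl in M. assert (T := sin2_cos2 t). unfold Rsqr in T.
assert (Cmod (rho * cos t, rho * sin t) * Cmod (rho * cos t, rho * sin t) = rho * rho) by (rewrite M; nra). nra. Qed.

Lemma no_branch_a kappa r : 0 < kappa -> 0 < r ->
  ~ exists g : C -> C, forall z, 0 < Cmod (z - (0, / kappa)) < r ->
        continuous g z /\ (g z * g z = radicand kappa z)%C.
Proof. intros Hk Hr [g Hg].
set (a := ((0, / kappa) : C)).
set (rho := Rmin (r / 2) (/ kappa)).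
assert (Hik : 0 < / kappa) by (apply Rinv_0_lt_compat; auto).
assert (Hrho : 0 < rho) by (unfold rho, Rmin; destruct Rle_dec; lra).
assert (Hrho1 : rho < r) by (unfold rho, Rmin; destruct Rle_dec; lra).
assert (Hrho2 : rho <= / kappa) by apply Rmin_r.
assert (Hkr : kappa * rho <= 1). { apply (Rmult_le_compat_l kappa) in Hrho2; [|lra]. rewrite Rinv_r in Hrho2; lra. }
set (zc := fun t : R => ((rho * cos t, / kappa + rho * sin t) : C)).
assert (Hzc : forall t, 0 < Cmod (zc t - (0, / kappa)) < r).
{ intros t. replace (Cminus (zc t) (0, / kappa)) with ((rho * cos t, rho * sin t) : C).
  rewrite Cmod_circle; lra. unfold zc, Cminus, Cplus, Copp; simpl. f_equal; ring. }
set (k := fun t => g (zc t)).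
set (wv := fun t : R => ((kappa ^ 2 * rho * cos t, 2 * kappa + kappa ^ 2 * rho * sin t) : C)).
assert (Hwv : forall t, 0 < Im (wv t)).
{ intros t. unfold wv; simpl. assert (S := SIN_bound t). assert (0 <= kappa * (kappa * rho) * (1 + sin t)) by
  (apply Rmult_le_pos; [apply Rmult_le_pos|]; nra). nra. }
assert (Hwv' : forall t, 0 < Cmod (wv t) + Re (wv t)) by (intros t; apply Cmod_Re_pos; left; specialize (Hwv t); lra).
set (A := fun t : R => ((sqrt rho * cos (t / 2), sqrt rho * sin (t / 2)) : C)).
set (phi := fun t => (A t * psqrt (wv t))%C).
assert (HA2 : forall t, Cmult (A t) (A t) = (rho * cos t, rho * sin t)).
{ intros t. unfold A, Cmult; simpl. assert (sqrt rho * sqrt rho = rho) by (apply sqrt_sqrt; lra).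
  assert (C2 : cos t = cos (t / 2) * cos (t / 2) - sin (t / 2) * sin (t / 2)) by (rewrite <- cos_2a; f_equal; field).
  assert (S2 : sin t = 2 * sin (t / 2) * cos (t / 2)) by (rewrite <- sin_2a; f_equal; field).
  rewrite C2, S2. f_equal; nra. }
assert (Hphi2 : forall t, (phi t * phi t = radicand kappa (zc t))%C).
{ intros t. unfold phi.
  replace (A t * psqrt (wv t) * (A t * psqrt (wv t)))%C with ((A t * A t) * (psqrt (wv t) * psqrt (wv t)))%C by ring.
  rewrite HA2. rewrite (proj1 (psqrt_spec _ (Hwv' t))).
  unfold wv, zc, radicand, Cmult, Cplus, RtoC; simpl. f_equal; field; lra. }
assert (Hphinz : forall t, phi t <> 0%C).
{ intros t. unfold phi. apply Cmult_neq_0.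
  - intro E. assert (E2 := HA2 t). rewrite E in E2. 
    assert (F1 := f_equal fst E2). assert (F2 := f_equal snd E2). simpl in F1, F2.
    assert (T := sin2_cos2 t). unfold Rsqr in T.
    assert (cos t = 0) by (apply (Rmult_eq_reg_l rho); lra).
    assert (sin t = 0) by (apply (Rmult_eq_reg_l rho); lra). nra.
  - apply Re_pos_nz. apply psqrt_spec; auto. }
set (f := fun t => Re (k t) * Re (phi t) + Im (k t) * Im (phi t)).
assert (Hfnz : forall t, f t <> 0).
{ intros t. destruct (Hg _ (Hzc t)) as [_ Ek]. fold (k t) in Ek. rewrite <- Hphi2 in Ek.
  assert (E : ((k t - phi t) * (k t + phi t) = 0)%C).
  { replace ((k t - phi t) * (k t + phi t))%C with (k t * k t - phi t * phi t)%C by ring. rewrite Ek. ring. }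
  assert (Np := Hphinz t). unfold f.
  destruct (Ceq_dec (k t + phi t) 0) as [E0|E0].
  - replace (k t) with (- phi t)%C by (replace (k t) with ((k t + phi t) - phi t)%C by ring; rewrite E0; ring).
    destruct (phi t) as [p q]. simpl.
    assert (0 < p * p + q * q). { destruct (Req_dec p 0). subst. assert (q <> 0) by (intro; subst; apply Np; reflexivity).
      assert (0 < q * q) by (apply Rsqr_pos_lt; auto). nra. assert (0 < p * p) by (apply Rsqr_pos_lt; auto). nra. }
    nra.
  - apply Cmult_eq_0_l in E; auto.
    replace (k t) with (phi t) by (replace (k t) with ((k t - phi t) + phi t)%C by ring; rewrite E; ring).
    destruct (phi t) as [p q]. simpl.
    assert (0 < p * p + q * q). { destruct (Req_dec p 0). subst. assert (q <> 0) by (intro; subst; apply Np; reflexivity).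
      assert (0 < q * q) by (apply Rsqr_pos_lt; auto). nra. assert (0 < p * p) by (apply Rsqr_pos_lt; auto). nra. }
    nra. }
assert (Hfc : forall t, continuous f t).
{ intros t. unfold f.
  assert (Ck : continuous k t).
  { unfold k. apply continuous_comp. unfold zc. apply cont_pair.
    apply cont_Rmult. apply cont_const. apply cont_cos. apply continuous_id.
    apply cont_Rplus. apply cont_const. apply cont_Rmult. apply cont_const. apply cont_sin. apply continuous_id.
    apply (Hg _ (Hzc t)). }
  assert (Cp : continuous phi t).
  { unfold phi. apply cont_Cmult.
    unfold A. apply cont_pair; apply cont_Rmult; try apply cont_const; [apply cont_cos|apply cont_sin];
    unfold Rdiv; apply cont_Rmult; try apply cont_const; apply continuous_id.
    apply continuous_comp. unfold wv. apply cont_pair. 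
    apply cont_Rmult. apply cont_const. apply cont_cos. apply continuous_id.
    apply cont_Rplus. apply cont_const. apply cont_Rmult. apply cont_const. apply cont_sin. apply continuous_id.
    apply psqrt_cont; auto. }
  apply cont_Rplus; apply cont_Rmult; try apply cont_Re; try apply cont_Im; auto. }
assert (Hk0 : k (2 * PI) = k 0). { unfold k, zc. rewrite cos_2PI, sin_2PI, cos_0, sin_0. reflexivity. }
assert (Hp0 : phi (2 * PI) = (- phi 0)%C).
{ unfold phi, A, wv. replace (2 * PI / 2) with PI by field. replace (0 / 2) with 0 by field.
  rewrite cos_2PI, sin_2PI, cos_PI, sin_PI, cos_0, sin_0.
  replace ((sqrt rho * -1, sqrt rho * 0) : C) with (Copp (sqrt rho * 1, sqrt rho * 0)).
  ring. unfold Copp; simpl. f_equal; ring. }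
assert (Hf0 : f (2 * PI) = - f 0).
{ unfold f. rewrite Hk0, Hp0. destruct (phi 0). simpl. ring. }
destruct (IVT_gen_consistent f 0 (2 * PI) 0 Hfc) as [t [_ Ht]].
- rewrite Hf0. unfold Rmin, Rmax. destruct Rle_dec; lra.
- apply (Hfnz t). exact Ht. Qed.

Lemma no_branch_ma kappa r : 0 < kappa -> 0 < r ->
  ~ exists g : C -> C, forall z, 0 < Cmod (z - (0, - / kappa)) < r ->
        continuous g z /\ (g z * g z = radicand kappa z)%C.
Proof. intros Hk Hr [g Hg]. apply (no_branch_a kappa r Hk Hr).
exists (fun z => g (- z)%C). intros z Hz.
assert (E : Cminus (Copp z) (0, - / kappa) = Copp (Cminus z (0, / kappa))).
{ destruct z; unfold Cminus, Copp, Cplus; simpl. f_equal; ring. }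
assert (Hz' : 0 < Cmod (Cminus (Copp z) (0, - / kappa)) < r) by (rewrite E, Cmod_opp; auto).
destruct (Hg _ Hz') as [C1 C2]. split.
- apply continuous_comp; auto. apply cont_Copp. apply cont_idC.
- rewrite C2. unfold radicand. ring. Qed.

Lemma part2 kappa s0 : 0 < kappa ->
  (sqrt_branch_point kappa s0 <-> (s0 = (0, / kappa) \/ s0 = (0, - / kappa))) /\
  (s0 <> (0, / kappa) -> s0 <> (0, - / kappa) -> sqrt_regular_point kappa s0).
Proof. intros Hk. split; [split|].
- intros Hb. destruct (classic (s0 = (0, / kappa))) as [E1|N1]; auto.
  destruct (classic (s0 = (0, - / kappa))) as [E2|N2]; auto. exfalso.
  destruct (regular kappa s0 Hk (radicand_nz kappa s0 Hk N1 N2)) as [r [Hr [g Hg]]].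
  apply (Hb r Hr). exists g. intros z Hz. destruct (Hg z (proj2 Hz)) as [D E]. split; auto.
  apply cont_from_abs. exact (@ex_derive_continuous C_AbsRing C_NormedModule g z D).
- intros [E|E]; subst s0; intros r Hr.
  apply no_branch_a; auto. apply no_branch_ma; auto.
- intros N1 N2. apply regular; auto. apply radicand_nz; auto. Qed.

Theorem lemma4p22 (ell kappa tau_buoy : R) (h_eq : R -> R) :
  0 < ell -> 0 < kappa -> 0 < tau_buoy ->
  (forall x, 0 <= x <= ell ->
     filterlim h_eq (within (fun y => 0 <= y <= ell) (locally x))
       (locally (h_eq x))) ->
  (forall x, 0 <= x <= ell -> 0 < h_eq x < 1) ->
  let t2 := tau_mu2 ell kappa tau_buoy h_eq in
  (* holomorphic on the open right half-plane *)
  (forall s : C, 0 < Re s ->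
     Pden ell kappa t2 s <> RtoC 0 /\ ex_derive (Hhat ell kappa t2) s) /\
  (* the only branching points are +- i/kappa *)
  (forall s0 : C,
     (sqrt_branch_point kappa s0 <-> (s0 = (0, / kappa) \/ s0 = (0, - / kappa))) /\
     (s0 <> (0, / kappa) -> s0 <> (0, - / kappa) -> sqrt_regular_point kappa s0)) /\
  (* zeros of P off the cuts have negative real part *)
  (forall s : C, ~ on_cuts kappa s -> Pden ell kappa t2 s = RtoC 0 -> Re s < 0) /\
  (* the extension of P by continuity to the imaginary axis has no zeros *)
  (forall y : R, exists L : C, L <> RtoC 0 /\
     filterlim (Pden ell kappa t2)
       (within (fun z : C => 0 < Re z) (locally ((0, y) : C))) (locally L)).
Proof.
intros Hl Hk Ht Hc Hh t2.
assert (T : kappa ^ 2 < t2) by (apply t2_facts; auto).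
assert (Hk2 : 0 < kappa ^ 2) by (apply pow_lt; auto).
assert (T0 : 0 <= t2) by lra.
split; [|split; [|split]].
- intros s Hs. apply part1; auto.
- intros s0. apply part2; auto.
- intros s Hc' E. apply (part3 ell kappa t2 s); auto.
- intros y. apply part4; auto.
Qed.
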